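(* For $m\ge1$, let $\mathbf{B}_m$ be the $m\times m$ symmetric tridiagonal matrix with diagonal entries $b_{kk}=4k^2-6k+3$ ($1\le k\le m$) and off-diagonal entries $b_{k,k+1}=b_{k+1,k}=-k(2k-1)$ ($1\le k\le m-1$), all other entries zero, and let $\mathbf{D}_m=\mathbf{B}_m-\frac12\mathbf{E}_m$ with $\mathbf{E}_m$ the identity matrix. Then for every $m\in\mathbb{N}$, $$\lambda_{\min}(\mathbf{B}_m)=\tfrac12+\lambda_{\min}(\mathbf{D}_m)>\tfrac12,$$ where $\lambda_{\min}$ denotes the smallest eigenvalue. *)

(* Defs.v *)
From mathcomp Require Import all_boot all_order all_algebra.
Set Implicit Arguments. Unset Strict Implicit. Unset Printing Implicit Defensive.
Import Order.TTheory GRing.Theory Num.Theory.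
Local Open Scope ring_scope.

(* B_m : 1-based index k corresponds to the ordinal i with val i = k - 1. *)
Definition Bmat (R : rcfType) (m : nat) : 'M[R]_m :=
  \matrix_(i < m, j < m)
    (let k : R := (i.+1)%:R in
     let l : R := (j.+1)%:R in
     if (i == j :> nat) then 4 * k ^+ 2 - 6 * k + 3
     else if (j == i.+1 :> nat) then - (k * (2 * k - 1))
     else if (i == j.+1 :> nat) then - (l * (2 * l - 1))
     else 0).

Definition Dmat (R : rcfType) (m : nat) : 'M[R]_m :=
  Bmat R m - (2%:R^-1)%:M.

Definition is_min_eigenvalue (R : rcfType) (m : nat) (A : 'M[R]_m) (l : R) :=
  eigenvalue A l /\ (forall a, eigenvalue A a -> l <= a).

(* Main.v *)
Require Import Defs.
From mathcomp Require Import all_boot all_order all_algebra.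
From mathcomp Require Import polyrcf complex.
From mathcomp Require Import ring lra zify.
Import Order.TTheory GRing.Theory Num.Theory.
Local Open Scope ring_scope.

Section P.
Variable R : rcfType.

Lemma Re_add (u w : R[i]) : complex.Re (u + w) = complex.Re u + complex.Re w.
Proof. by case: u => ? ?; case: w => ? ?; simpc. Qed.
Lemma Im_add (u w : R[i]) : complex.Im (u + w) = complex.Im u + complex.Im w.
Proof. by case: u => ? ?; case: w => ? ?; simpc. Qed.
Lemma Re_sum n (F : 'I_n -> R[i]) : complex.Re (\sum_j F j) = \sum_j complex.Re (F j).
Proof. exact: (big_morph _ Re_add). Qed.
Lemma Im_sum n (F : 'I_n -> R[i]) : complex.Im (\sum_j F j) = \sum_j complex.Im (F j).
Proof. exact: (big_morph _ Im_add). Qed.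
Lemma Re_mulC (u : R[i]) r : complex.Re (u * real_complex R r) = complex.Re u * r.
Proof. by case: u => p q; rewrite /real_complex_def; simpc. Qed.
Lemma Im_mulC (u : R[i]) r : complex.Im (u * real_complex R r) = complex.Im u * r.
Proof. by case: u => p q; rewrite /real_complex_def; simpc. Qed.
Lemma Re_mul (u w : R[i]) : complex.Re (u * w) = complex.Re u * complex.Re w - complex.Im u * complex.Im w.
Proof. by case: u => p q; case: w => r s; simpc. Qed.
Lemma Im_mul (u w : R[i]) : complex.Im (u * w) = complex.Re u * complex.Im w + complex.Im u * complex.Re w.
Proof. by case: u => p q; case: w => r s; simpc. Qed.

Definition fm n (u w : 'rV[R]_n) := \sum_j u 0 j * w 0 j.
Arguments fm {n}.

Lemma fm_sym n (A : 'M[R]_n) u w : A^T = A -> fm (u *m A) w = fm (w *m A) u.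
Proof.
move=> hA; rewrite /fm.
under eq_bigr do rewrite mxE big_distrl.
rewrite exchange_big /=; apply: eq_bigr => j _.
rewrite mxE big_distrl; apply: eq_bigr => i _ /=.
have -> : A j i = A i j by rewrite -[in LHS]hA mxE.
ring.
Qed.

Lemma fm_lin n (u1 u2 w : 'rV[R]_n) a b :
  fm (a *: u1 - b *: u2) w = a * fm u1 w - b * fm u2 w.
Proof.
rewrite /fm !mulr_sumr -sumrB; apply: eq_bigr => j _; rewrite !mxE; ring.
Qed.

Lemma fm_lin2 n (u1 u2 w : 'rV[R]_n) a b :
  fm (a *: u1 + b *: u2) w = a * fm u1 w + b * fm u2 w.
Proof.
rewrite /fm !mulr_sumr -big_split; apply: eq_bigr => j _; by rewrite !mxE mulrDl !mulrA.
Qed.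

Lemma fmC n (u w : 'rV[R]_n) : fm u w = fm w u.
Proof. by rewrite /fm; apply: eq_bigr => j _; rewrite mulrC. Qed.

Lemma sym_eig n (A : 'M[R]_n.+1) : A^T = A -> exists a, eigenvalue A a.
Proof.
move=> hA.
pose Ac := map_mx (real_complex R) A.
have : size (char_poly Ac) != 1%N by rewrite size_char_poly.
move/closed_rootP => [z]; rewrite -eigenvalue_root_char => /eigenvalueP [v hv vn0].
pose x := \row_j complex.Re (v 0 j); pose y := \row_j complex.Im (v 0 j).
pose a := complex.Re z; pose b := complex.Im z.
have hx : x *m A = a *: x - b *: y.
  apply/rowP => k; have := congr1 (fun M : 'rV[R[i]]_n.+1 => complex.Re (M 0 k)) hv.
  rewrite /= !mxE Re_sum Re_mul => <-.
  by apply: eq_bigr => j _; rewrite !mxE Re_mulC.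
have hy : y *m A = b *: x + a *: y.
  apply/rowP => k; have := congr1 (fun M : 'rV[R[i]]_n.+1 => complex.Im (M 0 k)) hv.
  rewrite /= !mxE Im_sum Im_mul => e.
  rewrite addrC -e.
  by apply: eq_bigr => j _; rewrite !mxE Im_mulC.
have hv0 : forall j, complex.Re (v 0 j) = 0 -> complex.Im (v 0 j) = 0 -> v 0 j = 0.
  move=> j; case: (v 0 j) => p q /= -> ->; by [].
have pos : fm x x + fm y y != 0.
  apply/negP => /eqP h0; move/negP: vn0; apply; apply/eqP/rowP => j.
  rewrite mxE.
  have sqx : forall c : R, 0 <= c * c by move=> c; rewrite -expr2 sqr_ge0.
  have hs : \sum_j (x 0 j * x 0 j + y 0 j * y 0 j) = 0 by rewrite big_split.
  have H := @psumr_eq0P R _ xpredT (fun j => x 0 j * x 0 j + y 0 j * y 0 j)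
    (fun i _ => addr_ge0 (sqx _) (sqx _)) hs j isT.
  move/eqP: H; rewrite paddr_eq0 ?sqx // !mulf_eq0 !orbb !mxE.
  by case/andP => /eqP ? /eqP ?; exact: hv0.
have hb : b = 0.
  have e1 := @fm_sym _ A x y hA.
  rewrite hx hy fm_lin fm_lin2 (@fmC _ y x) in e1.
  have : b * (fm x x + fm y y) = 0.
    transitivity ((b * fm x x + a * fm x y) - (a * fm x y - b * fm y y)); first by ring.
    by rewrite e1 subrr.
  by move/eqP; rewrite mulf_eq0 (negbTE pos) orbF => /eqP.
rewrite hb scale0r subr0 in hx; rewrite hb scale0r add0r in hy.
have [x0|xn0] := eqVneq x 0.
  exists a; apply/eigenvalueP; exists y => //.
  apply/negP => /eqP y0; move/negP: vn0; apply; apply/eqP/rowP => j.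
  have := congr1 (fun M : 'rV[R]_n.+1 => M 0 j) x0; have := congr1 (fun M : 'rV[R]_n.+1 => M 0 j) y0.
  rewrite /= !mxE => h1 h2; exact: hv0.
by exists a; apply/eigenvalueP; exists x.
Qed.
Lemma sum_delta N a (F : R) :
  \sum_(0 <= i < N) (if i == a then F else 0) = if (a < N)%N then F else 0.
Proof.
elim: N => [|N IH]; first by rewrite big_geq.
rewrite big_nat_recr //= IH.
case: (ltngtP a N) => h.
- have -> : (a < N.+1)%N by lia.
  by rewrite ?(gtn_eqF h) ?h addr0.
- have -> : (a < N.+1)%N = false by lia.
  by rewrite ?(ltn_eqF h) ?h addr0.
- by rewrite h ?eqxx ?ltnn leqnn add0r.
Qed.

Lemma sum_shift N (F : nat -> R) : F 0%N = 0 -> F N = 0 ->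
  \sum_(0 <= k < N) F k.+1 = \sum_(0 <= k < N) F k.
Proof.
move=> h0 hN.
have := @big_nat_recl R 0 +%R N 0 F (leq0n N).
by rewrite big_nat_recr //= h0 hN add0r addr0 => ->.
Qed.

Definition bf (i j : nat) : R :=
    (let k : R := (i.+1)%:R in
     let l : R := (j.+1)%:R in
     if (i == j) then 4 * k ^+ 2 - 6 * k + 3
     else if (j == i.+1) then - (k * (2 * k - 1))
     else if (i == j.+1) then - (l * (2 * l - 1))
     else 0).

Definition dd (i : nat) : R := let k : R := (i.+1)%:R in 4 * k ^+ 2 - 6 * k + 3.
Definition cc (i : nat) : R := let k : R := (i.+1)%:R in - (k * (2 * k - 1)).

Lemma bf_sym i j : bf i j = bf j i.
Proof.
rewrite /bf; case: (ltngtP i j) => h.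
- rewrite ?(ltn_eqF h) ?(gtn_eqF h).
  have -> : (i == j.+1) = false by apply/eqP; lia.
  by [].
- rewrite ?(ltn_eqF h) ?(gtn_eqF h).
  have -> : (j == i.+1) = false by apply/eqP; lia.
  by [].
- by rewrite h.
Qed.

Lemma bf_split (g : nat -> R) i j :
  g i * bf i j * g j =
  (if j == i then dd i * g i * g i else 0) +
  (if j == i.+1 then cc i * g i * g i.+1 else 0) +
  (if i == j.+1 then cc j * g j.+1 * g j else 0).
Proof.
rewrite /bf /dd /cc; case: (ltngtP i j) => h.
- rewrite ?(ltn_eqF h) ?(gtn_eqF h).
  have -> : (i == j.+1) = false by apply/eqP; lia.
  case: eqP => [->|_]; first by ring.
  by rewrite mulr0 mul0r !addr0.
- rewrite ?(ltn_eqF h) ?(gtn_eqF h).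
  have -> : (j == i.+1) = false by apply/eqP; lia.
  case: eqP => [->|_]; first by ring.
  by rewrite mulr0 mul0r !addr0.
- rewrite -h.
  have -> : (i == i.+1) = false by apply/eqP; lia.
  ring.
Qed.

Lemma key (N : nat) (g : nat -> R) : g N = 0 ->
  2 * \sum_(0 <= j < N) (\sum_(0 <= i < N) g i * bf i j) * g j =
  \sum_(0 <= k < N) g k * g k +
  \sum_(0 <= k < N) ((2 * k%:R + 1) * g k - (2 * k%:R + 2) * g k.+1) ^+ 2.
Proof.
move=> gN.
have S1 : \sum_(0 <= j < N) \sum_(0 <= i < N) (if j == i then dd i * g i * g i else 0)
    = \sum_(0 <= k < N) dd k * g k * g k.
  apply: eq_big_nat => j /andP[_ hj].
  rewrite (eq_bigr (fun i => if i == j then dd j * g j * g j else 0)).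
    by rewrite sum_delta hj.
  by move=> i _; rewrite eq_sym; case: eqP => [->|].
have S2 : \sum_(0 <= j < N) \sum_(0 <= i < N) (if j == i.+1 then cc i * g i * g i.+1 else 0)
    = \sum_(0 <= k < N) cc k * g k * g k.+1.
  rewrite exchange_big /=; apply: eq_big_nat => i /andP[_ hi].
  rewrite sum_delta; case: ltnP => // h.
  have -> : i.+1 = N by lia.
  by rewrite gN mulr0.
have S3 : \sum_(0 <= j < N) \sum_(0 <= i < N) (if i == j.+1 then cc j * g j.+1 * g j else 0)
    = \sum_(0 <= k < N) cc k * g k.+1 * g k.
  apply: eq_big_nat => j /andP[_ hj].
  rewrite sum_delta; case: ltnP => // h.
  have -> : j.+1 = N by lia.
  by rewrite gN mulr0 mul0r.
have E : \sum_(0 <= j < N) (\sum_(0 <= i < N) g i * bf i j) * g j =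
   \sum_(0 <= k < N) (dd k * g k * g k + cc k * g k * g k.+1 + cc k * g k.+1 * g k).
  rewrite !big_split /= -S1 -S2 -S3 -!big_split /=.
  apply: eq_bigr => j _; rewrite big_distrl -!big_split /=.
  by apply: eq_bigr => i _; rewrite bf_split.
have Sh := @sum_shift N (fun k => (2 * k%:R) ^+ 2 * (g k * g k)).
rewrite /= mulr0 expr0n /= mul0r gN mul0r mulr0 in Sh.
have {}Sh := Sh erefl erefl.
rewrite E mulr_sumr.
rewrite [X in _ = _ + X](eq_bigr (fun k => ((2 * k%:R + 1)^+2 * (g k * g k) - 2 * (2*k%:R+1) * (2*k%:R+2) * (g k * g k.+1)) + (2 * k.+1%:R)^+2 * (g k.+1 * g k.+1))); last first.
  by move=> k _; rewrite -natr1; ring.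
rewrite big_split /= Sh -!big_split /=.
by apply: eq_bigr => k _; rewrite /dd /cc -natr1; ring.
Qed.

Lemma seq_min (s : seq R) : s != [::] ->
  exists2 x, x \in s & forall y, y \in s -> x <= y.
Proof.
case: s => // a s _; elim: s a => [|b s IH] a.
  by exists a; [rewrite mem_head | move=> y; rewrite inE => /eqP ->].
have [c hc hm] := IH a.
case: (leP c b) => h.
  exists c; first by move: hc; rewrite !inE => /orP[->|->]; rewrite ?orbT.
  move=> y; rewrite !inE => /orP[/eqP->|/orP[/eqP->//|ys]].
    by apply: hm; rewrite mem_head.
  by apply: hm; rewrite inE ys orbT.
exists b; first by rewrite !inE eqxx orbT.
move=> y; rewrite !inE => /orP[/eqP->|/orP[/eqP->//|ys]].
  by apply: le_trans (ltW h) (hm _ _); rewrite mem_head.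
by apply: le_trans (ltW h) (hm _ _); rewrite inE ys orbT.
Qed.

Lemma min_eig n (A : 'M[R]_n.+1) : A^T = A -> exists l, is_min_eigenvalue A l.
Proof.
move=> hA; have [a0 ha0] := @sym_eig _ A hA.
have pn0 : char_poly A != 0 by rewrite monic_neq0 // char_poly_monic.
have hr := roots_on_rootsR pn0.
have eigE : forall x, eigenvalue A x = (x \in rootsR (char_poly A)).
  by move=> x; rewrite eigenvalue_root_char -hr in_itv.
have : rootsR (char_poly A) != [::].
  by apply/eqP => e; move: ha0; rewrite eigE e.
move/seq_min => [l hl hm]; exists l; split; first by rewrite eigE.
by move=> a; rewrite eigE; exact: hm.
Qed.

Lemma eig_shift n (A : 'M[R]_n) c l :
  eigenvalue (A - c%:M) l = eigenvalue A (l + c).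
Proof.
apply/eigenvalueP/eigenvalueP => [[v hv nz]|[v hv nz]]; exists v => //.
  by move: hv; rewrite mulmxBr mul_mx_scalar scalerDl => <-; rewrite subrK.
by rewrite mulmxBr mul_mx_scalar hv scalerDl addrK.
Qed.

Lemma Bsym N : (Bmat R N)^T = Bmat R N.
Proof. by apply/matrixP => i j; rewrite !mxE; exact: bf_sym. Qed.

Lemma lB_gt n (l : R) : eigenvalue (Bmat R n.+1) l -> 2%:R^-1 < l.
Proof.
move/eigenvalueP => [x hx xn0].
pose N := n.+1.
pose g k := if (k < N)%N then x 0 (inord k) else 0.
have gN : g N = 0 by rewrite /g ltnn.
have gx : forall j : 'I_N, x 0 j = g j by move=> j; rewrite /g ltn_ord inord_val.
have hQ : \sum_(0 <= j < N) (\sum_(0 <= i < N) g i * bf i j) * g j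
    = l * \sum_(0 <= k < N) g k * g k.
  transitivity (\sum_(j < N) (x *m Bmat R N) 0 j * x 0 j).
    rewrite big_mkord; apply: eq_bigr => j _; rewrite mxE big_mkord gx.
    congr (_ * _); apply: eq_bigr => i _; by rewrite mxE gx.
  rewrite hx mulr_sumr big_mkord; apply: eq_bigr => j _.
  by rewrite mxE gx mulrA.
have K := @key N g gN; rewrite hQ in K.
have sqx : forall c : R, 0 <= c * c by move=> c; rewrite -expr2 sqr_ge0.
have G0 : 0 <= \sum_(0 <= k < N) g k * g k by apply: sumr_ge0 => k _.
set H := \sum_(0 <= k < N) (_ ^+ 2) in K.
have H0 : 0 < H.
  rewrite lt_def sumr_ge0 ?andbT; last by move=> k _; rewrite sqr_ge0.
  apply/negP => /eqP H0; move/negP: xn0; apply.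
  move/eqP: H0; rewrite psumr_eq0; last by move=> k _; rewrite sqr_ge0.
  move/allP => hh.
  have hh' : forall k, (k < N)%N ->
      (2 * k%:R + 1) * g k - (2 * k%:R + 2) * g k.+1 = 0.
    move=> k hk; have := hh k; rewrite mem_index_iota hk /= sqrf_eq0.
    by move=> /(_ isT) /eqP.
  have allg : forall t, (t <= N)%N -> g (N - t)%N = 0.
    elim => [_|t IH ht]; first by rewrite subn0.
    have hk : (N - t.+1 < N)%N by lia.
    have e := hh' _ hk.
    have e2 : (N - t.+1).+1 = (N - t)%N by lia.
    rewrite e2 IH ?(ltnW ht) // mulr0 subr0 in e.
    move/eqP: e; rewrite mulf_eq0 => /orP[|/eqP //].
    have -> : 2 * (N - t.+1)%N%:R + 1 = ((2 * (N - t.+1)).+1)%N%:R :> R.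
      by rewrite -[in RHS]natr1 natrM.
    by rewrite pnatr_eq0.
  apply/eqP/rowP => j; rewrite !mxE gx.
  have := allg (N - j)%N (leq_subr _ _).
  by rewrite subKn // ltnW.
nra.
Qed.

End P.

Theorem corollary4p2 (R : rcfType) (m : nat) (hm : (0 < m)%N) :
  exists lB lD : R,
    is_min_eigenvalue (Bmat R m) lB /\ is_min_eigenvalue (Dmat R m) lD /\
    lB = 2%:R^-1 + lD /\ 2%:R^-1 < lB.
Proof.
case: m hm => // n _.
have [lB [hB hBmin]] := @min_eig R n _ (Bsym R n.+1).
exists lB, (lB - 2%:R^-1).
split; first by split.
split.
  split; first by rewrite /Dmat eig_shift subrK.
  by move=> a; rewrite /Dmat eig_shift => /hBmin; rewrite lerBlDr.
split; first by rewrite addrC subrK.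
exact: (@lB_gt R n lB hB).
Qed.
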